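(* Let $X$ be an $X$-set parameter, let $t\ge 0$ be an integer, let $G$ be a graph, and let $H$ be an induced subgraph of $\mathscr{X}^{\rm TAR}(G)$. If $H\cong Q_t$ (the $t$-dimensional hypercube), then $V(H)$ is an interval $[S,T]=\{R: S\subseteq R\subseteq T\}$ of length $t$ (i.e., $|T\setminus S|=t$) in the poset $(\mathcal{P}(V(G)),\subseteq)$.
   Context: All graphs are simple, finite, with nonempty vertex set. An $X$-set parameter is a graph parameter $X(G)$ defined as the minimum cardinality of an $X$-set of $G$, where the $X$-sets of each graph are subsets of its vertex set determined by some property satisfying: (1) supersets (within $V(G)$) of $X$-sets are $X$-sets; (2) the empty set is never an $X$-set; (3) an $X$-set of a disconnected graph is the union of an $X$-set of each component; (4) if $G$ has no isolated vertices, every set of $|V(G)|-1$ vertices is an $X$-set. The $X$-TAR graph $\mathscr{X}^{\rm TAR}(G)$ has as vertices all $X$-sets of $G$, with $S_1,S_2$ adjacent iff $|S_1\ominus S_2|=1$. $\mathcal{P}(V(G))$ is the power set of $V(G)$; the length of an interval is the maximum length (number of elements minus one) of a chain in it. *)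

(* Defs.v *)
From mathcomp Require Import all_boot.
Set Implicit Arguments. Unset Strict Implicit. Unset Printing Implicit Defensive.

Definition simple_graph (T : finType) (e : rel T) : Prop :=
  symmetric e /\ irreflexive e /\ 0 < #|T|.

Definition symdiff (T : finType) (A B : {set T}) : {set T} :=
  (A :\: B) :|: (B :\: A).

Definition is_component (T : finType) (e : rel T) (C : {set T}) : Prop :=
  exists x, C = [set y | connect e x y].

Definition induced (T : finType) (e : rel T) (C : {set T}) :
  rel {x : T | x \in C} := fun x y => e (val x) (val y).

(* An X-set parameter, given by its X-set predicate:
   Xp T e S  <=>  S is an X-set of the graph (T, e). *)
Record Xset_parameter (Xp : forall T : finType, rel T -> {set T} -> bool) : Prop := {
  xp_up : forall (T : finType) (e : rel T), simple_graph e ->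
    forall S1 S2 : {set T}, S1 \subset S2 -> Xp T e S1 -> Xp T e S2;
  xp_empty : forall (T : finType) (e : rel T), simple_graph e -> ~~ Xp T e set0;
  (* (3) X-sets of a disconnected graph are exactly unions of X-sets of the
     components, i.e. sets whose trace on each component C is an X-set of G[C] *)
  xp_comp : forall (T : finType) (e : rel T), simple_graph e ->
    (exists x y : T, ~~ connect e x y) ->
    forall S : {set T},
      Xp T e S <->
      (forall C : {set T}, is_component e C ->
         Xp {x : T | x \in C} (@induced T e C) [set x | val x \in S]);
  xp_full : forall (T : finType) (e : rel T), simple_graph e ->
    (forall x : T, exists y : T, e x y) ->
    forall S : {set T}, #|S| = #|T| - 1 -> Xp T e S
}.

(* Adjacency in the X-TAR graph / in the hypercube Q_t (on subsets of 'I_t). *)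
Definition tar_adj (T : finType) (A B : {set T}) : bool := #|symdiff A B| == 1.

(* W (a set of X-sets of G, i.e. the vertex set of an induced subgraph H of the
   X-TAR graph) induces a subgraph isomorphic to Q_t, whose vertices are the
   subsets of 'I_t, adjacent iff their symmetric difference has size 1. *)
Definition induces_hypercube (T : finType) (W : {set {set T}}) (t : nat) : Prop :=
  exists f : {set 'I_t} -> {set T},
    injective f /\ (forall R, R \in W <-> exists A, R = f A) /\
    (forall A B, tar_adj A B = tar_adj (f A) (f B)).

(* Main.v *)
Require Import Defs.
From mathcomp Require Import all_boot zify.

Lemma in_sd (T : finType) (A B : {set T}) v :
  (v \in symdiff A B) = (v \in A) (+) (v \in B).
Proof. rewrite /symdiff !inE; by case: (v \in A); case: (v \in B). Qed.

Lemma adjP (T : finType) (A B : {set T}) :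
  tar_adj A B -> exists a, B = symdiff A [set a].
Proof.
rewrite /tar_adj => /cards1P [a Ha]; exists a; apply/setP => v.
rewrite -Ha !in_sd; by case: (v \in A); case: (v \in B).
Qed.

Lemma adjD1 (T : finType) (B : {set T}) i : i \in B -> tar_adj (B :\ i) B.
Proof.
move=> Hi; rewrite /tar_adj; apply/cards1P; exists i; apply/setP => v.
rewrite in_sd !inE; case: eqP => [->|] //=; rewrite ?Hi //.
by case: (v \in B).
Qed.

Lemma imD1 (T U : finType) (x : T -> U) (B : {set T}) i v :
  injective x -> i \in B ->
  (v \in x @: (B :\ i)) = (v \in x @: B) (+) (v == x i).
Proof.
move=> inj Hi; case: eqP => [->|Hv].
  by rewrite !mem_imset // !inE eqxx Hi.
rewrite addbF; apply/imsetP/imsetP => [[k Hk ->]|[k Hk Ev]].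
  by exists k => //; move: Hk; rewrite !inE => /andP [].
exists k => //; rewrite !inE Hk andbT; apply/eqP => Eki; apply: Hv; by rewrite Ev Eki.
Qed.

Theorem lemma2p1
  (Xp : forall T : finType, rel T -> {set T} -> bool) (HX : Xset_parameter Xp)
  (t : nat) (V : finType) (e : rel V) (HG : simple_graph e)
  (W : {set {set V}}) (HW : forall S, S \in W -> Xp V e S)
  (Hiso : induces_hypercube W t) :
  exists S T : {set V}, S \subset T /\
    W = [set R : {set V} | (S \subset R) && (R \subset T)] /\ #|T :\: S| = t.
Proof.
case: Hiso => f [finj [HWf Hadj]].
pose f0 := f set0.
have ex : forall i : 'I_t, exists a, f [set i] = symdiff f0 [set a].
  move=> i; apply: adjP; rewrite -Hadj; apply/cards1P; exists i.
  apply/setP => v; rewrite in_sd !inE; by case: (v == i).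
have ex' : forall i : 'I_t, exists a, f [set i] == symdiff f0 [set a].
  by move=> i; case: (ex i) => a ->; exists a.
pose x i := xchoose (ex' i).
have Hx : forall i, f [set i] = symdiff f0 [set x i] by move=> i; exact/eqP/(xchooseP (ex' i)).
have xinj : injective x.
  move=> i j Eij; apply/set1_inj/finj; by rewrite !Hx Eij.
have main : forall n (B : {set 'I_t}), #|B| < n -> f B = symdiff f0 (x @: B).
  elim=> [//|n IH] B HB.
  case: (posnP #|B|) => [/eqP|]; first rewrite cards_eq0 => /eqP ->.
    by apply/setP => v; rewrite imset0 in_sd inE addbF.
  move=> /card_gt0P [i Hi].
  have cB := cardsD1 i B; rewrite Hi in cB.
  case: (posnP #|B :\ i|) => [E0|].
    move/eqP: E0; rewrite cards_eq0 => /eqP E0.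
    have -> : B = [set i].
      apply/setP => v; rewrite inE; case: eqP => [->//|nv].
      apply/negbTE; apply/negP => Hv.
      have : v \in B :\ i by rewrite !inE Hv andbT; apply/eqP.
      by rewrite E0 inE.
    by rewrite imset_set1 Hx.
  move=> /card_gt0P [j]; rewrite !inE => /andP [nji Hj].
  have IHi : f (B :\ i) = symdiff f0 (x @: (B :\ i)) by apply: IH; rewrite cB in HB.
  have Hj' : j \in B :\ i by rewrite !inE nji.
  have cB2 := cardsD1 j (B :\ i); rewrite Hj' in cB2.
  have IHj : f (B :\ j) = symdiff f0 (x @: (B :\ j)).
    apply: IH; have := cardsD1 j B; rewrite Hj => cBj; rewrite cBj in HB; done.
  have IHij : f (B :\ i :\ j) = symdiff f0 (x @: (B :\ i :\ j)).
    by apply: IH; rewrite cB cB2 in HB; move: HB; rewrite /= ; lia.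
  have [a Ha] : exists a, f B = symdiff (f (B :\ i)) [set a].
    by apply: adjP; rewrite -Hadj; exact: adjD1.
  have [b Hb] : exists b, f B = symdiff (f (B :\ j)) [set b].
    by apply: adjP; rewrite -Hadj; exact: adjD1.
  have Ei : forall v, (v \in f B) = (v \in f0) (+) (v \in x @: B) (+) (v == x i) (+) (v == a).
    by move=> v; rewrite Ha in_sd IHi in_sd imD1 // inE !addbA.
  have Ej : forall v, (v \in f B) = (v \in f0) (+) (v \in x @: B) (+) (v == x j) (+) (v == b).
    by move=> v; rewrite Hb in_sd IHj in_sd imD1 // inE !addbA.
  have E := fun v => etrans (esym (Ei v)) (Ej v).
  have xij : (x i == x j) = false.
    by apply/negbTE/negP => /eqP /xinj Eij; move: nji; rewrite Eij eqxx.
  case Ea: (a == x i).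
    apply/setP => v; rewrite Ei (eqP Ea) -addbA addbb addbF in_sd; done.
  have xib : x i == b.
    move: (E (x i)); rewrite eqxx xij eq_sym Ea.
    by case: (x i \in f0); case: (x i \in x @: B); case: (x i == b).
  have xaj : a == x j.
    move: (E a); rewrite eqxx Ea -(eqP xib) Ea.
    by case: (a \in f0); case: (a \in x @: B); case: (a == x j).
  have EB : f B = f (B :\ i :\ j).
    apply/setP => v; rewrite Ei IHij in_sd !imD1 // (eqP xaj); by rewrite !addbA.
  move: Hi; rewrite {1}(finj _ _ EB) !inE eqxx /=; by rewrite andbF.
pose X := x @: [set: 'I_t].
have hXA : forall (A : {set 'I_t}) v, v \in x @: A -> v \in X.
  by move=> A v; apply/subsetP/imsetS/subsetT.
exists (f0 :\: X), (f0 :|: X); split.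
  by apply/subsetP => v; rewrite !inE => /andP [_ ->].
split.
  apply/setP => R; rewrite inE; apply/idP/idP.
    move/HWf => [A ->]; rewrite (main _ A (ltnSn _)).
    apply/andP; split; apply/subsetP => v; rewrite in_sd !inE.
      move=> /andP [nX ->]; case: (boolP (v \in x @: A)) => // /hXA H.
      by rewrite H in nX.
    case: (v \in f0) => //=; by move/hXA.
  move=> /andP [HS HT]; apply/HWf; exists (x @^-1: symdiff f0 R).
  rewrite (main _ _ (ltnSn _)); apply/setP => v; rewrite in_sd.
  have -> : (v \in x @: (x @^-1: symdiff f0 R)) = (v \in symdiff f0 R).
    apply/imsetP/idP => [[k Hk ->]|Hv]; first by rewrite inE in Hk.
    case: (boolP (v \in X)) => [/imsetP [k _ Ek]|nX].
      by exists k => //; rewrite inE -Ek.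
    exfalso; move: Hv; rewrite in_sd.
    case Hf: (v \in f0); case HR: (v \in R) => //=.
      have : v \in f0 :\: X by rewrite inE nX Hf.
      by move/(subsetP HS); rewrite HR.
    have : v \in f0 :|: X by apply: (subsetP HT).
    by rewrite inE Hf (negbTE nX).
  rewrite in_sd; by case: (v \in f0); case: (v \in R).
have -> : (f0 :|: X) :\: (f0 :\: X) = X.
  apply/setP => v; rewrite !inE; by case: (v \in f0); case: (v \in X).
by rewrite card_imset // cardsT card_ord.
Qed.
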